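(* For every partial trace $T$ of iTML, the set $\mathrm{Prefix}(T) = \{T' \mid T' \sqsubseteq T\}$, ordered by $\sqsubseteq$, is a complete lattice.
   Context: Partial expressions $e$ of iTML are built from $x \mid () \mid \mathsf{inl}\,e \mid \mathsf{inr}\,e \mid (e_1,e_2) \mid \mathsf{fst}\,e \mid \mathsf{snd}\,e \mid \mathsf{fun}\,f(x).M \mid \Box$ (with $M$ partial computations, $\Box$ a hole), ordered by the least order $\sqsubseteq$ with $\Box\sqsubseteq t$ that is closed under constructors componentwise. Outcomes $k ::= \mathsf{val} \mid \mathsf{exn}$; $\ell$ ranges over store locations and $\mathcal{L}$ over finite sets of locations. Partial traces: $T ::= \mathsf{return}\,e \mid \mathsf{let_F}(T) \mid \mathsf{let_S}(T_1, x.T_2) \mid \mathsf{app}(e_1,e_2,f.x.T) \mid \mathsf{caseL}(e,x.T,y) \mid \mathsf{caseR}(e,x,y.T) \mid \mathsf{raise}\,e \mid \mathsf{try_S}(T) \mid \mathsf{try_F}(T_1,x.T_2) \mid \mathsf{ref}_\ell\,e \mid e_1 :=_\ell e_2 \mid !_\ell\,e \mid \Box^{k}_{\mathcal{L}}$. The set $\mathsf{writes}(T)$: $\mathsf{writes}(\Box^k_{\mathcal{L}})=\mathcal{L}$; $\emptyset$ for $\mathsf{return}\,e$, $\mathsf{raise}\,e$ and $!_\ell\,e$; $\{\ell\}$ for $\mathsf{ref}_\ell\,e$ and $e_1:=_\ell e_2$; $\mathsf{writes}(T_1)\cup\mathsf{writes}(T_2)$ for $\mathsf{let_S}(T_1,x.T_2)$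 and $\mathsf{try_F}(T_1,x.T_2)$; $\mathsf{writes}(T)$ for $\mathsf{let_F}(T)$, $\mathsf{try_S}(T)$, $\mathsf{app}(e_1,e_2,f.x.T)$, $\mathsf{caseL}(e,x.T,y)$, $\mathsf{caseR}(e,x,y.T)$. The outcome $\mathsf{outcome}(T)$: $k$ for $\Box^k_{\mathcal{L}}$; $\mathsf{val}$ for $\mathsf{return}\,e$, $\mathsf{try_S}(T)$, $\mathsf{ref}_\ell\,e$, $e_1:=_\ell e_2$, $!_\ell\,e$; $\mathsf{exn}$ for $\mathsf{let_F}(T)$ and $\mathsf{raise}\,e$; $\mathsf{outcome}(T_2)$ for $\mathsf{let_S}(T_1,x.T_2)$ and $\mathsf{try_F}(T_1,x.T_2)$; $\mathsf{outcome}(T)$ for $\mathsf{app}(\ldots,T)$, $\mathsf{caseL}(e,x.T,y)$, $\mathsf{caseR}(e,x,y.T)$. The order $\sqsubseteq$ on traces is the least relation containing $\Box^{k}_{\mathcal{L}} \sqsubseteq T$ whenever $\mathsf{writes}(T)=\mathcal{L}$ and $\mathsf{outcome}(T)=k$, and closed under each trace constructor componentwise (with expression components compared by $\sqsubseteq$ on expressions and the labels $\ell$, $x,y,f$ identical), e.g. $\mathsf{let_S}(T_1,x.T_2)\sqsubseteq\mathsf{let_S}(T_1',x.T_2')$ iff $T_i\sqsubseteq T_i'$, and $e_1 :=_\ell e_2 \sqsubseteq e_1' :=_\ell e_2'$ iff $e_i\sqsubseteq e_i'$. There is no universal least trace. *)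

(* Defs.v *)
From mathcomp Require Import all_boot finmap.
Set Implicit Arguments. Unset Strict Implicit. Unset Printing Implicit Defensive.

Definition var := nat.
Definition loc := nat.

Inductive expr : Type :=
| EVar  : var -> expr
| EUnit : expr
| EInl  : expr -> expr
| EInr  : expr -> expr
| EPair : expr -> expr -> expr
| EFst  : expr -> expr
| ESnd  : expr -> expr
| EFun  : var -> var -> comp -> expr
| EHole : expr
with comp : Type :=
| CReturn : expr -> comp
| CLet    : comp -> var -> comp -> comp
| CApp    : expr -> expr -> comp
| CCase   : expr -> var -> comp -> var -> comp -> comp
| CRaise  : expr -> comp
| CTry    : comp -> var -> comp -> comp
| CRef    : expr -> comp
| CAssign : expr -> expr -> comp
| CDeref  : expr -> comp
| CHole   : comp.

Inductive ele : expr -> expr -> Prop :=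
| ele_hole e : ele EHole e
| ele_var x : ele (EVar x) (EVar x)
| ele_unit : ele EUnit EUnit
| ele_inl e e' : ele e e' -> ele (EInl e) (EInl e')
| ele_inr e e' : ele e e' -> ele (EInr e) (EInr e')
| ele_pair e1 e2 e1' e2' : ele e1 e1' -> ele e2 e2' -> ele (EPair e1 e2) (EPair e1' e2')
| ele_fst e e' : ele e e' -> ele (EFst e) (EFst e')
| ele_snd e e' : ele e e' -> ele (ESnd e) (ESnd e')
| ele_fun f x M M' : cle M M' -> ele (EFun f x M) (EFun f x M')
with cle : comp -> comp -> Prop :=
| cle_hole M : cle CHole M
| cle_return e e' : ele e e' -> cle (CReturn e) (CReturn e')
| cle_let M1 M2 M1' M2' x : cle M1 M1' -> cle M2 M2' -> cle (CLet M1 x M2) (CLet M1' x M2')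
| cle_app e1 e2 e1' e2' : ele e1 e1' -> ele e2 e2' -> cle (CApp e1 e2) (CApp e1' e2')
| cle_case e e' x M1 M1' y M2 M2' : ele e e' -> cle M1 M1' -> cle M2 M2' ->
    cle (CCase e x M1 y M2) (CCase e' x M1' y M2')
| cle_raise e e' : ele e e' -> cle (CRaise e) (CRaise e')
| cle_try M1 M2 M1' M2' x : cle M1 M1' -> cle M2 M2' -> cle (CTry M1 x M2) (CTry M1' x M2')
| cle_ref e e' : ele e e' -> cle (CRef e) (CRef e')
| cle_assign e1 e2 e1' e2' : ele e1 e1' -> ele e2 e2' -> cle (CAssign e1 e2) (CAssign e1' e2')
| cle_deref e e' : ele e e' -> cle (CDeref e) (CDeref e').

Inductive outcome := Val | Exn.

Inductive trace : Type :=
| TReturn : expr -> trace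
| TLetF   : trace -> trace
| TLetS   : trace -> var -> trace -> trace
| TApp    : expr -> expr -> var -> var -> trace -> trace
| TCaseL  : expr -> var -> trace -> var -> trace
| TCaseR  : expr -> var -> var -> trace -> trace
| TRaise  : expr -> trace
| TTryS   : trace -> trace
| TTryF   : trace -> var -> trace -> trace
| TRef    : loc -> expr -> trace
| TAssign : loc -> expr -> expr -> trace
| TDeref  : loc -> expr -> trace
| TBox    : outcome -> {fset loc} -> trace.

Local Open Scope fset_scope.

Fixpoint writes (T : trace) : {fset loc} :=
  match T with
  | TBox _ L => L
  | TReturn _ | TRaise _ | TDeref _ _ => fset0
  | TRef l _ | TAssign l _ _ => [fset l]
  | TLetS T1 _ T2 | TTryF T1 _ T2 => writes T1 `|` writes T2
  | TLetF T | TTryS T | TApp _ _ _ _ T | TCaseL _ _ T _ | TCaseR _ _ _ T => writes T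
  end.

Fixpoint toutcome (T : trace) : outcome :=
  match T with
  | TBox k _ => k
  | TReturn _ | TTryS _ | TRef _ _ | TAssign _ _ _ | TDeref _ _ => Val
  | TLetF _ | TRaise _ => Exn
  | TLetS _ _ T2 | TTryF _ _ T2 => toutcome T2
  | TApp _ _ _ _ T | TCaseL _ _ T _ | TCaseR _ _ _ T => toutcome T
  end.

Inductive tle : trace -> trace -> Prop :=
| tle_box k L T : writes T = L -> toutcome T = k -> tle (TBox k L) T
| tle_return e e' : ele e e' -> tle (TReturn e) (TReturn e')
| tle_letF T T' : tle T T' -> tle (TLetF T) (TLetF T')
| tle_letS T1 T2 T1' T2' x : tle T1 T1' -> tle T2 T2' -> tle (TLetS T1 x T2) (TLetS T1' x T2')
| tle_app e1 e2 e1' e2' f x T T' : ele e1 e1' -> ele e2 e2' -> tle T T' ->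
    tle (TApp e1 e2 f x T) (TApp e1' e2' f x T')
| tle_caseL e e' x T T' y : ele e e' -> tle T T' -> tle (TCaseL e x T y) (TCaseL e' x T' y)
| tle_caseR e e' x y T T' : ele e e' -> tle T T' -> tle (TCaseR e x y T) (TCaseR e' x y T')
| tle_raise e e' : ele e e' -> tle (TRaise e) (TRaise e')
| tle_tryS T T' : tle T T' -> tle (TTryS T) (TTryS T')
| tle_tryF T1 T2 T1' T2' x : tle T1 T1' -> tle T2 T2' -> tle (TTryF T1 x T2) (TTryF T1' x T2')
| tle_ref l e e' : ele e e' -> tle (TRef l e) (TRef l e')
| tle_assign l e1 e2 e1' e2' : ele e1 e1' -> ele e2 e2' -> tle (TAssign l e1 e2) (TAssign l e1' e2')
| tle_deref l e e' : ele e e' -> tle (TDeref l e) (TDeref l e').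

Definition Prefix (T : trace) : trace -> Prop := fun T' => tle T' T.

Definition is_lub {A} (le : A -> A -> Prop) (P S : A -> Prop) (u : A) : Prop :=
  P u /\ (forall s, S s -> le s u) /\
  (forall v, P v -> (forall s, S s -> le s v) -> le u v).

Definition is_glb {A} (le : A -> A -> Prop) (P S : A -> Prop) (l : A) : Prop :=
  P l /\ (forall s, S s -> le l s) /\
  (forall v, P v -> (forall s, S s -> le v s) -> le v l).

Definition complete_lattice {A} (le : A -> A -> Prop) (P : A -> Prop) : Prop :=
  [/\ (forall a, P a -> le a a),
      (forall a b, P a -> P b -> le a b -> le b a -> a = b),
      (forall a b c, P a -> P b -> P c -> le a b -> le b c -> le a c) &
      (forall S : A -> Prop, (forall s, S s -> P s) ->
         (exists u, is_lub le P S u) /\ (exists l, is_glb le P S l))].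

(* Main.v *)
Require Import Defs.
From mathcomp Require Import all_boot finmap.
From Stdlib Require Import Classical Lia.

Scheme expr_mind := Induction for expr Sort Prop with comp_mind := Induction for Defs.comp Sort Prop.
Combined Scheme exprcomp_mind from expr_mind, comp_mind.
Scheme ele_mind := Induction for ele Sort Prop with cle_mind := Induction for cle Sort Prop.
Combined Scheme le_mind from ele_mind, cle_mind.

Lemma ec_refl : (forall e, ele e e) /\ (forall M, cle M M).
Proof. apply exprcomp_mind; intros; constructor; auto. Qed.
Lemma ele_refl e : ele e e. Proof. exact (proj1 ec_refl e). Qed.
Lemma cle_refl M : cle M M. Proof. exact (proj2 ec_refl M). Qed.
Lemma tle_refl T : tle T T.
Proof. induction T; constructor; auto using ele_refl. Qed.

#[local] Hint Constructors ele cle tle : lat.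
#[local] Hint Resolve ele_refl cle_refl tle_refl : lat.

Ltac mcase :=
  intros;
  first [ solve [simpl; eauto with lat]
        | match goal with H : ele _ _ |- _ => inversion H; subst; simpl; solve [eauto with lat] end
        | match goal with H : cle _ _ |- _ => inversion H; subst; simpl; solve [eauto with lat] end ].

Lemma ec_trans : (forall a b, ele a b -> forall c, ele b c -> ele a c) /\
                 (forall a b, cle a b -> forall c, cle b c -> cle a c).
Proof.
  apply (le_mind (fun a b _ => forall c, ele b c -> ele a c)
                 (fun a b _ => forall c, cle b c -> cle a c)); mcase.
Qed.

Fixpoint ej (a b : expr) : expr :=
 match a, b with
 | EHole, _ => b
 | _, EHole => a
 | EInl a1, EInl b1 => EInl (ej a1 b1)
 | EInr a1, EInr b1 => EInr (ej a1 b1)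
 | EPair a1 a2, EPair b1 b2 => EPair (ej a1 b1) (ej a2 b2)
 | EFst a1, EFst b1 => EFst (ej a1 b1)
 | ESnd a1, ESnd b1 => ESnd (ej a1 b1)
 | EFun f x M, EFun _ _ N => EFun f x (cj M N)
 | _, _ => a
 end
with cj (a b : Defs.comp) : Defs.comp :=
 match a, b with
 | CHole, _ => b
 | _, CHole => a
 | CReturn e, CReturn e' => CReturn (ej e e')
 | CLet M1 x M2, CLet N1 _ N2 => CLet (cj M1 N1) x (cj M2 N2)
 | CApp e1 e2, CApp e1' e2' => CApp (ej e1 e1') (ej e2 e2')
 | CCase e x M1 y M2, CCase e' _ N1 _ N2 => CCase (ej e e') x (cj M1 N1) y (cj M2 N2)
 | CRaise e, CRaise e' => CRaise (ej e e')
 | CTry M1 x M2, CTry N1 _ N2 => CTry (cj M1 N1) x (cj M2 N2)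
 | CRef e, CRef e' => CRef (ej e e')
 | CAssign e1 e2, CAssign e1' e2' => CAssign (ej e1 e1') (ej e2 e2')
 | CDeref e, CDeref e' => CDeref (ej e e')
 | _, _ => a
 end.

Lemma ej_l : (forall a c, ele a c -> forall b, ele b c -> ele a (ej a b)) /\
             (forall a c, cle a c -> forall b, cle b c -> cle a (cj a b)).
Proof.
  apply (le_mind (fun a c _ => forall b, ele b c -> ele a (ej a b))
                 (fun a c _ => forall b, cle b c -> cle a (cj a b))); mcase.
Qed.
Lemma ej_r : (forall a c, ele a c -> forall b, ele b c -> ele b (ej a b)) /\
             (forall a c, cle a c -> forall b, cle b c -> cle b (cj a b)).
Proof.
  apply (le_mind (fun a c _ => forall b, ele b c -> ele b (ej a b))
                 (fun a c _ => forall b, cle b c -> cle b (cj a b))); mcase.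
Qed.
Lemma ej_le : (forall a c, ele a c -> forall b, ele b c -> ele (ej a b) c) /\
             (forall a c, cle a c -> forall b, cle b c -> cle (cj a b) c).
Proof.
  apply (le_mind (fun a c _ => forall b, ele b c -> ele (ej a b) c)
                 (fun a c _ => forall b, cle b c -> cle (cj a b) c)); mcase.
Qed.

Lemma tle_inv a b : tle a b -> writes a = writes b /\ toutcome a = toutcome b.
Proof. induction 1; simpl; intuition congruence. Qed.

Lemma box_below k L b c : tle b c -> writes c = L -> toutcome c = k -> tle (TBox k L) b.
Proof. intros H1 H2 H3; destruct (@tle_inv _ _ H1); constructor; congruence. Qed.

Lemma ele_trans a b c : ele a b -> ele b c -> ele a c.
Proof. intros; eapply (proj1 ec_trans); eauto. Qed.
Lemma cle_trans a b c : cle a b -> cle b c -> cle a c.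
Proof. intros; eapply (proj2 ec_trans); eauto. Qed.
#[local] Hint Resolve ele_trans cle_trans : lat.

Lemma tle_trans a b c : tle a b -> tle b c -> tle a c.
Proof.
  intros H; revert c; induction H; intros c Hc; inversion Hc; subst;
    try solve [constructor; eauto with lat].
  all: try (destruct (@tle_inv _ _ Hc); constructor; congruence).
Qed.

Fixpoint tj (a b : trace) : trace :=
 match a, b with
 | TBox _ _, _ => b
 | _, TBox _ _ => a
 | TReturn e, TReturn e' => TReturn (ej e e')
 | TLetF T, TLetF T' => TLetF (tj T T')
 | TLetS T1 x T2, TLetS T1' _ T2' => TLetS (tj T1 T1') x (tj T2 T2')
 | TApp e1 e2 f x T, TApp e1' e2' _ _ T' => TApp (ej e1 e1') (ej e2 e2') f x (tj T T')
 | TCaseL e x T y, TCaseL e' _ T' _ => TCaseL (ej e e') x (tj T T') y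
 | TCaseR e x y T, TCaseR e' _ _ T' => TCaseR (ej e e') x y (tj T T')
 | TRaise e, TRaise e' => TRaise (ej e e')
 | TTryS T, TTryS T' => TTryS (tj T T')
 | TTryF T1 x T2, TTryF T1' _ T2' => TTryF (tj T1 T1') x (tj T2 T2')
 | TRef l e, TRef _ e' => TRef l (ej e e')
 | TAssign l e1 e2, TAssign _ e1' e2' => TAssign l (ej e1 e1') (ej e2 e2')
 | TDeref l e, TDeref _ e' => TDeref l (ej e e')
 | _, _ => a
 end.

Lemma ej_l' a b c : ele a c -> ele b c -> ele a (ej a b).
Proof. intros; eapply (proj1 ej_l); eauto. Qed.
Lemma ej_r' a b c : ele a c -> ele b c -> ele b (ej a b).
Proof. intros; eapply (proj1 ej_r); eauto. Qed.
Lemma ej_le' a b c : ele a c -> ele b c -> ele (ej a b) c.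
Proof. intros; eapply (proj1 ej_le); eauto. Qed.
#[local] Hint Resolve ej_l' ej_r' ej_le' box_below : lat.

Lemma tj_all a c : tle a c -> forall b, tle b c ->
  tle a (tj a b) /\ tle b (tj a b) /\ tle (tj a b) c.
Proof.
  induction 1; intros b Hb.
  - simpl; subst; split; [eapply box_below; eauto | split; auto with lat].
  - inversion Hb; subst; simpl; repeat split; eauto 7 with lat.
  all: inversion Hb; subst; simpl;
    repeat match goal with IH : forall b, tle b ?c -> _, H : tle ?x ?c |- _ =>
      destruct (IH x H) as (? & ? & ?); clear IH end;
    repeat split; eauto 7 with lat.
Qed.

Fixpoint esize (a : expr) : nat :=
 match a with
 | EHole => 0
 | EVar _ | EUnit => 1
 | EInl a | EInr a | EFst a | ESnd a => S (esize a)
 | EPair a b => S (Nat.add (esize a) (esize b))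
 | EFun _ _ M => S (csize M)
 end
with csize (M : Defs.comp) : nat :=
 match M with
 | CHole => 0
 | CReturn e | CRaise e | CRef e | CDeref e => S (esize e)
 | CLet M1 _ M2 | CTry M1 _ M2 => S (Nat.add (csize M1) (csize M2))
 | CApp e1 e2 | CAssign e1 e2 => S (Nat.add (esize e1) (esize e2))
 | CCase e _ M1 _ M2 => S (Nat.add (esize e) (Nat.add (csize M1) (csize M2)))
 end.

Lemma size_mono : (forall a b, ele a b -> Peano.le (esize a) (esize b)) /\
                  (forall a b, cle a b -> Peano.le (csize a) (csize b)).
Proof. apply le_mind; intros; simpl; lia. Qed.

Lemma size_eq : (forall a b, ele a b -> esize a = esize b -> a = b) /\
                (forall a b, cle a b -> csize a = csize b -> a = b).
Proof.
  apply le_mind.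
  all: intros; simpl in *;
    repeat match goal with H : ele _ _ |- _ => apply (proj1 size_mono) in H
                         | H : cle _ _ |- _ => apply (proj2 size_mono) in H end.
  all: try (match goal with |- EHole = ?e => destruct e; simpl in *; try lia; reflexivity end).
  all: try (match goal with |- CHole = ?e => destruct e; simpl in *; try lia; reflexivity end).
  all: f_equal; try reflexivity; match goal with IH : _ = _ -> ?x = ?y |- ?x = ?y => apply IH; lia end.
Qed.

Fixpoint tsize (a : trace) : nat :=
 match a with
 | TBox _ _ => 0
 | TReturn e | TRaise e | TRef _ e | TDeref _ e => S (esize e)
 | TLetF T | TTryS T => S (tsize T)
 | TLetS T1 _ T2 | TTryF T1 _ T2 => S (Nat.add (tsize T1) (tsize T2))
 | TApp e1 e2 _ _ T => S (Nat.add (esize e1) (Nat.add (esize e2) (tsize T)))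
 | TCaseL e _ T _ | TCaseR e _ _ T => S (Nat.add (esize e) (tsize T))
 | TAssign _ e1 e2 => S (Nat.add (esize e1) (esize e2))
 end.

Lemma tsize_mono a b : tle a b -> Peano.le (tsize a) (tsize b).
Proof.
  induction 1; simpl;
  repeat match goal with H : ele _ _ |- _ => apply (proj1 size_mono) in H end; lia.
Qed.

Lemma tsize_eq a b : tle a b -> tsize a = tsize b -> a = b.
Proof.
  induction 1; simpl; intros.
  - subst; destruct T; simpl in *; try lia; reflexivity.
  all: repeat match goal with H : ele _ _ |- _ =>
      let h := fresh in let h2 := fresh in pose proof ((proj1 size_mono) _ _ H) as h;
      pose proof ((proj1 size_eq) _ _ H) as h2; clear H end;
    repeat match goal with H : tle _ _ |- _ => let h := fresh in
      pose proof (@tsize_mono _ _ H) as h; clear H end.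
  all: repeat match goal with H : esize _ = esize _ -> _ = _ |- _ =>
      rewrite H; [|lia]; clear H end;
    f_equal; try (match goal with IH : _ = _ -> ?x = ?y |- ?x = ?y => apply IH; lia end).
Qed.

Lemma max_nat (Q : nat -> Prop) N : (exists n, Q n) -> (forall n, Q n -> Peano.le n N) ->
  exists m, Q m /\ forall n, Q n -> Peano.le n m.
Proof.
  induction N; intros [n Hn] Hb.
  - exists n; split; auto; intros n' H'; pose proof (Hb _ H'); lia.
  - destruct (classic (Q (S N))) as [HQ|HQ].
    + exists (S N); auto.
    + apply IHN; [eauto|]. intros n' H'; specialize (Hb _ H').
      assert (n' <> S N) by (intro; subst; auto). lia.
Qed.

Lemma glb_ex T (S : trace -> Prop) : (forall s, S s -> Prefix T s) ->
  exists l, is_glb tle (Prefix T) S l.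
Proof.
  intros HS.
  set (L := fun v => tle v T /\ forall s, S s -> tle v s).
  destruct (@max_nat (fun n => exists v, L v /\ tsize v = n) (tsize T)) as [m [[v0 [Lv0 Hv0]] Hmax]].
  - exists 0, (TBox (toutcome T) (writes T)); split; [split|reflexivity].
    + constructor; reflexivity.
    + intros s Hs; eapply box_below; [apply HS; exact Hs| |]; reflexivity.
  - intros n [v [[Hv _] <-]]; apply tsize_mono; exact Hv.
  - exists v0; destruct Lv0 as [Hv0T Hv0S]; split; [exact Hv0T|split; [exact Hv0S|]].
    intros v Hv HvS.
    destruct (@tj_all _ _ Hv0T _ Hv) as (H1 & H2 & H3).
    assert (Lj : L (tj v0 v)).
    { split; [exact H3|]. intros s Hs. apply (@tj_all _ _ (Hv0S s Hs) _ (HvS s Hs)). }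
    assert (Hsz := Hmax _ (ex_intro _ _ (conj Lj (erefl _)))).
    pose proof (@tsize_mono _ _ H1).
    assert (E : v0 = tj v0 v) by (apply tsize_eq; [exact H1|lia]).
    rewrite E; exact H2.
Qed.

Theorem lemma4p1 (T : trace) : complete_lattice tle (Prefix T).
Proof.
  split.
  - intros; apply tle_refl.
  - intros a b _ _ H1 H2. apply tsize_eq; [exact H1|].
    pose proof (@tsize_mono _ _ H1); pose proof (@tsize_mono _ _ H2); lia.
  - intros a b c _ _ _; apply tle_trans.
  - intros S HS; split; [|apply glb_ex; exact HS].
    set (U := fun v => Prefix T v /\ forall s, S s -> tle s v).
    destruct (@glb_ex T U (fun s H => proj1 H)) as [u [Pu [Hu1 Hu2]]].
    exists u; split; [exact Pu|split].
    + intros s Hs; apply Hu2; [apply HS; exact Hs|]. intros w [_ Hw]; apply Hw; exact Hs.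
    + intros v Pv Hv; apply Hu1; split; assumption.
Qed.
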